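(* Let $R$ be a positive random variable such that $e^R$ has infinite upper endpoint and lies in the Gumbel max-domain of attraction with scaling function $e$. Let $\lambda,\beta>0$, let $\gamma_u>0$ with $\gamma_u\to\gamma\in(0,\infty)$, and let $k>d$ be a constant. Then, as $u\to\infty$, $$\int_0^{1-\log(k)/\log u}\mathbb P\big(\lambda e^{R\theta\beta\gamma_u}>u/d\big)f(\theta)\,d\theta=o\!\left(\Big(\frac{e^*(u)}{u\log u}\Big)^{\frac{d-1}{2}}\mathbb P\big(\lambda e^{R\beta\gamma_u}>u\big)\right).$$
   Context: $d\ge2$ is an integer and $f(\theta)=\frac{\Gamma(d/2)}{\sqrt\pi\,\Gamma((d-1)/2)}(1-\theta^2)^{(d-3)/2}$, $\theta\in(-1,1)$. Gumbel max-domain of attraction with scaling function $e$ means $\lim_{t\to\infty}\mathbb P(e^R>t+xe(t))/\mathbb P(e^R>t)=e^{-x}$ for all real $x$. Define $e^*(u)=\beta\gamma_u\,u\,e(w(u))/w(u)$ with $w(u)=(u/\lambda)^{1/(\beta\gamma_u)}$. *)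

(* Defs.v *)
From Stdlib Require Import Reals Lra.
Open Scope R_scope.

(* The law of the positive random variable R is represented by its survival
   function S x = P(R > x). *)
Definition is_survival_of_positive_rv (S : R -> R) : Prop :=
  (forall x, 0 <= S x <= 1) /\
  (forall x y, x <= y -> S y <= S x) /\
  (forall x eps, 0 < eps -> exists delta, 0 < delta /\
      forall y, x < y < x + delta -> Rabs (S y - S x) < eps) /\
  (forall eps, 0 < eps -> exists M, forall x, M < x -> S x < eps) /\
  S 0 = 1.   (* P(R > 0) = 1 : R is positive *)

(* P(e^R > y) *)
Definition tail_expR (S : R -> R) (y : R) : R :=
  if Rlt_dec 0 y then S (ln y) else 1.

Definition infinite_upper_endpoint_expR (S : R -> R) : Prop :=
  forall y, 0 < tail_expR S y.

Definition gumbel_MDA_expR (S : R -> R) (e : R -> R) : Prop :=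
  forall x eps, 0 < eps -> exists T, forall t, T < t ->
    Rabs (tail_expR S (t + x * e t) / tail_expR S t - exp (- x)) < eps.

(* P(lam * exp(R * c) > v), for lam > 0 and c >= 0
   (only c >= 0 is ever used; the value for c < 0 is an irrelevant filler). *)
Definition prob_lam_exp_gt (S : R -> R) (lam c v : R) : R :=
  if Rle_dec v 0 then 1
  else if Rlt_dec 0 c then S (ln (v / lam) / c)
  else if Req_EM_T c 0 then (if Rlt_dec v lam then 1 else 0)
  else 0.

(* Gamma(n/2) for n >= 1 : Gamma(1/2) = sqrt pi, Gamma(1) = 1,
   Gamma(s+1) = s Gamma(s).  (n = 0 is a pole; filler value.) *)
Fixpoint gamma_half (n : nat) : R :=
  match n with
  | O => 0
  | S O => sqrt PI
  | S (S O) => 1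
  | S (S m as p) => (INR m / 2) * gamma_half m
  end.

Definition f_dens (d : nat) (theta : R) : R :=
  gamma_half d / (sqrt PI * gamma_half (d - 1))
  * Rpower (1 - theta ^ 2) ((INR d - 3) / 2).

Definition w_fun (lam beta : R) (gam : R -> R) (u : R) : R :=
  Rpower (u / lam) (1 / (beta * gam u)).

Definition e_star (e : R -> R) (lam beta : R) (gam : R -> R) (u : R) : R :=
  beta * gam u * u * e (w_fun lam beta gam u) / w_fun lam beta gam u.

(* Main.v *)
Require Import Defs.
From Stdlib Require Import Reals.
From Stdlib Require Import ZArith Lra Lia RList RiemannInt_SF RiemannInt.
From Coquelicot Require Coquelicot.
Open Scope R_scope.

Fixpoint stv (n:nat) (x0 h:R) (F:R->R) (t:R) : R :=
  match n with O => F x0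
  | S n' => if Rle_dec t (x0+h) then F x0 else stv n' (x0+h) h F t end.
Fixpoint slst (n:nat) (x0 h:R) : list R :=
  match n with O => x0 :: (x0+h) :: nil | S n' => x0 :: slst n' (x0+h) h end.
Fixpoint svals (n:nat) (x0 h:R) (F:R->R) : list R :=
  match n with O => F x0 :: nil | S n' => F x0 :: svals n' (x0+h) h F end.

Lemma slst_len n x0 h : length (slst n x0 h) = S (S n).
Proof. revert x0; induction n; intros; simpl; auto. Qed.
Lemma svals_len n x0 h F : length (svals n x0 h F) = S n.
Proof. revert x0; induction n; intros; simpl; auto. Qed.

Lemma slst_last n x0 h : pos_Rl (slst n x0 h) (S n) = x0 + INR (S n) * h.
Proof.
  revert x0; induction n; intros; simpl.
  - ring.
  - destruct n; simpl in *; rewrite IHn; ring.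
Qed.

Lemma slst_ge n x0 h : 0 <= h -> forall i, (i <= S n)%nat -> x0 <= pos_Rl (slst n x0 h) i.
Proof.
  revert x0; induction n; intros x0 Hh i Hi; simpl.
  - destruct i as [|[|i]]; simpl; try lra; lia.
  - destruct i; [lra|]. apply Rle_trans with (x0+h); [lra|]. apply IHn; [lra|lia].
Qed.

Lemma slst_ord n x0 h : 0 <= h -> ordered_Rlist (slst n x0 h).
Proof.
  revert x0; induction n; intros x0 Hh i Hi; rewrite slst_len in Hi; simpl.
  - destruct i; simpl; [lra|lia].
  - destruct i.
    + simpl. destruct n; simpl; lra.
    + apply IHn; auto. rewrite slst_len; simpl in *; lia.
Qed.

Lemma slst_const n x0 h F : 0 < h -> forall i, (i < S n)%nat ->
  constant_D_eq (stv n x0 h F)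
    (open_interval (pos_Rl (slst n x0 h) i) (pos_Rl (slst n x0 h) (S i)))
    (pos_Rl (svals n x0 h F) i).
Proof.
  revert x0; induction n; intros x0 Hh i Hi t Ht; unfold open_interval in Ht.
  - destruct i; [|lia]. simpl. reflexivity.
  - destruct i.
    + simpl in *. destruct (Rle_dec t (x0+h)); [reflexivity|].
      destruct n; simpl in Ht; lra.
    + simpl in Ht |- *. destruct (Rle_dec t (x0+h)) as [r|r]; simpl in Hi.
      * exfalso. assert (x0 + h <= pos_Rl (slst n (x0+h) h) i).
        { apply slst_ge; [lra|lia]. } lra.
      * apply IHn; auto; lia.
Qed.

Lemma stv_adapted n a b h F : 0 < h -> b = a + INR (S n) * h ->
  adapted_couple (stv n a h F) a b (slst n a h) (svals n a h F).
Proof.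
  intros Hh Hb.
  assert (Hab : a <= b). { subst b. assert (0 <= INR (S n)) by apply pos_INR. nra. }
  repeat split.
  - apply slst_ord; lra.
  - rewrite Rmin_left by lra. destruct n; reflexivity.
  - rewrite Rmax_right by lra. rewrite slst_len. simpl pred. rewrite slst_last. auto.
  - rewrite slst_len, svals_len; auto.
  - intros i Hi. rewrite slst_len in Hi. apply slst_const; auto.
Qed.

Definition stv_SF n a b h F (Hh : 0 < h) (Hb : b = a + INR (S n) * h) : StepFun a b :=
  mkStepFun (existT _ (slst n a h) (existT _ (svals n a h F) (stv_adapted n a b h F Hh Hb))).

Lemma Int_svals n x0 h F :
  Int_SF (svals n x0 h F) (slst n x0 h) = h * (F x0 + 0) + 
    match n with O => 0 | S n' => Int_SF (svals n' (x0+h) h F) (slst n' (x0+h) h) end.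
Proof.
  destruct n; simpl. ring. destruct n; simpl; ring.
Qed.

Lemma Int_tele n x0 h f :
  Int_SF (svals n x0 h (fun x => f (x+h) - f x)) (slst n x0 h) = h * (f (x0 + INR (S n) * h) - f x0).
Proof.
  revert x0; induction n; intros x0.
  - simpl. replace (x0 + 1 * h) with (x0 + h) by ring. ring.
  - rewrite Int_svals. rewrite IHn.
    replace (x0 + h + INR (S n) * h) with (x0 + INR (S (S n)) * h).
    + ring.
    + rewrite (S_INR (S n)). ring.
Qed.

Lemma stv_bound n x0 h f : 0 < h ->
  (forall x y, x0 <= x -> x <= y -> y <= x0 + INR (S n) * h -> f x <= f y) ->
  forall t, x0 <= t <= x0 + INR (S n) * h ->
  Rabs (f t - stv n x0 h f t) <= stv n x0 h (fun x => f (x+h) - f x) t.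
Proof.
  revert x0; induction n; intros x0 Hh Hm t Ht.
  - simpl in *. replace (x0 + 1 * h) with (x0+h) in * by ring.
    assert (f x0 <= f t) by (apply Hm; lra). assert (f t <= f (x0+h)) by (apply Hm; lra).
    rewrite Rabs_right; lra.
  - simpl stv. assert (HS: INR (S (S n)) = INR (S n) + 1) by apply S_INR.
    assert (0 <= INR (S n)) by apply pos_INR.
    destruct (Rle_dec t (x0+h)).
    + assert (f x0 <= f t) by (apply Hm; nra). assert (f t <= f (x0+h)) by (apply Hm; nra).
      rewrite Rabs_right; lra.
    + apply IHn; auto.
      * intros x y ? ? ?. apply Hm; nra.
      * nra.
Qed.

Lemma mono_int (f : R -> R) (a b : R) : a < b ->
  (forall x y, a <= x -> x <= y -> y <= b -> f x <= f y) -> Riemann_integrable f a b.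
Proof.
  intros Hab Hm eps.
  set (r := (b - a) * (f b - f a) / eps).
  destruct (archimed r) as [Hup _].
  set (n := Z.to_nat (up r)).
  assert (Hn : r < INR (S n)).
  { rewrite S_INR. unfold n. destruct (Z.lt_ge_cases (up r) 0).
    - replace (Z.to_nat (up r)) with 0%nat by lia. simpl. assert (IZR (up r) <= -1).
      { apply IZR_le. lia. } lra.
    - rewrite INR_IZR_INZ, Z2Nat.id by lia. lra. }
  assert (HSn : 0 < INR (S n)) by (apply lt_0_INR; lia).
  set (h := (b - a) / INR (S n)).
  assert (Hh : 0 < h) by (unfold h; apply Rdiv_lt_0_compat; lra).
  assert (Hb : b = a + INR (S n) * h) by (unfold h; field; lra).
  exists (stv_SF n a b h f Hh Hb).
  exists (stv_SF n a b h (fun x => f (x+h) - f x) Hh Hb).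
  split.
  - intros t Ht. rewrite Rmin_left, Rmax_right in Ht by lra. simpl.
    apply stv_bound; auto.
    + intros; apply Hm; lra.
    + lra.
  - unfold RiemannInt_SF. destruct (Rle_dec a b); [|lra].
    simpl. unfold subdivision_val, subdivision. simpl. rewrite Int_tele. rewrite <- Hb.
    assert (f a <= f b) by (apply Hm; lra).
    rewrite Rabs_right by (apply Rle_ge, Rmult_le_pos; lra).
    assert (Hr : (b - a) * (f b - f a) < eps * INR (S n)).
    { unfold r in Hn. apply (Rmult_lt_compat_r eps) in Hn; [|apply cond_pos].
      unfold Rdiv in Hn. rewrite Rmult_assoc, Rinv_l in Hn by (apply Rgt_not_eq, cond_pos). lra. }
    unfold h. apply Rmult_lt_reg_r with (INR (S n)); auto.
    replace ((b - a) / INR (S n) * (f b - f a) * INR (S n)) with ((b-a)*(f b - f a)) by (field; lra).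
    lra.
Qed.

Lemma lnle x y : 0 < x -> x <= y -> ln x <= ln y.
Proof. intros. destruct (Req_dec x y). subst; lra. left; apply ln_increasing; lra. Qed.
Lemma lngt0 x : 1 < x -> 0 < ln x.
Proof. intros. rewrite <- ln_1. apply ln_increasing; lra. Qed.
Lemma exple x y : x <= y -> exp x <= exp y.
Proof. intros. destruct (Req_dec x y). subst; lra. left; apply exp_increasing; lra. Qed.

Lemma G_mono S : is_survival_of_positive_rv S -> forall y1 y2, y1 <= y2 -> tail_expR S y2 <= tail_expR S y1.
Proof.
  intros [H1 [H2 _]] y1 y2 Hy. unfold tail_expR.
  destruct (Rlt_dec 0 y2), (Rlt_dec 0 y1).
  - apply H2. apply lnle; lra.
  - apply H1.
  - lra.
  - lra.
Qed.

Lemma G_bnd S : is_survival_of_positive_rv S -> forall y, 0 <= tail_expR S y <= 1.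
Proof. intros [H1 _] y. unfold tail_expR. destruct (Rlt_dec 0 y); auto; lra. Qed.

Lemma G_to0 S : is_survival_of_positive_rv S -> forall eps, 0 < eps -> exists T, forall t, T < t -> tail_expR S t < eps.
Proof.
  intros HS eps Heps. destruct HS as [_ [_ [_ [H4 _]]]].
  destruct (H4 eps Heps) as [M HM]. exists (exp M). intros t Ht.
  unfold tail_expR. assert (0 < t) by (pose proof (exp_pos M); lra).
  destruct (Rlt_dec 0 t); [|lra]. apply HM. rewrite <- (ln_exp M). apply ln_increasing; auto. apply exp_pos.
Qed.

Lemma mda_up S e : gumbel_MDA_expR S e -> infinite_upper_endpoint_expR S ->
  forall x eps, 0 < eps -> exists T, forall t, T < t ->
    tail_expR S (t + x * e t) <= (exp (-x) + eps) * tail_expR S t.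
Proof.
  intros Hg Hi x eps Heps. destruct (Hg x eps Heps) as [T HT]. exists T. intros t Ht.
  specialize (HT t Ht). specialize (Hi t). apply Rabs_def2 in HT. destruct HT as [HT _].
  assert (tail_expR S (t + x * e t) / tail_expR S t < exp (-x) + eps) by lra.
  apply Rmult_lt_compat_r with (r := tail_expR S t) in H; auto.
  unfold Rdiv in H. rewrite Rmult_assoc, Rinv_l in H by lra. lra.
Qed.

Lemma e_small S e : is_survival_of_positive_rv S -> gumbel_MDA_expR S e -> infinite_upper_endpoint_expR S ->
  (forall t, 0 < e t) ->
  forall delta, 0 < delta -> exists T, forall t, T < t -> e t <= delta * t.
Proof.
  intros HS Hg Hi He delta Hd.
  destruct (mda_up S e Hg Hi (- / delta) 1 Rlt_0_1) as [T1 HT1].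
  assert (Hp : 0 < / (exp (- - / delta) + 1)).
  { apply Rinv_0_lt_compat. pose proof (exp_pos (- - / delta)). lra. }
  destruct (G_to0 S HS _ Hp) as [T2 HT2].
  exists (Rmax 0 (Rmax T1 T2)). intros t Ht.
  apply Rmax_Rlt in Ht. destruct Ht as [Ht0 Ht]. apply Rmax_Rlt in Ht. destruct Ht as [Ht1 Ht2].
  destruct (Rle_dec (e t) (delta * t)) as [|Hn]; auto. exfalso.
  specialize (HT1 t Ht1). specialize (HT2 t Ht2).
  assert (Hneg : t + - / delta * e t <= 0).
  { assert (e t > delta * t) by lra.
    assert (/delta * e t > t).
    { apply Rmult_gt_compat_l with (r := /delta) in H; [|apply Rinv_0_lt_compat; lra].
      rewrite <- Rmult_assoc, Rinv_l in H by lra. lra. }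
    lra. }
  unfold tail_expR at 1 in HT1. destruct (Rlt_dec 0 _) as [r|r]; [lra|].
  set (c := exp (- - / delta) + 1) in *.
  assert (0 < c) by (unfold c; pose proof (exp_pos (- - / delta)); lra).
  apply Rmult_lt_compat_l with (r := c) in HT2; auto. rewrite Rinv_r in HT2 by lra. lra.
Qed.

Lemma pow2_bracket : forall r, 1 <= r -> exists n, 2 ^ n <= r < 2 ^ (S n).
Proof.
  assert (H : forall N r, 1 <= r -> r < 2 ^ N -> exists n, 2 ^ n <= r < 2 ^ (S n)).
  { induction N; intros r H1 H2.
    - simpl in H2; lra.
    - destruct (Rlt_dec r (2 ^ N)).
      + apply IHN; auto.
      + exists N. split; [lra|auto]. }
  intros r Hr. apply (H (Z.to_nat (up r))); auto.
  destruct (archimed r) as [H1 _].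
  assert (forall n, INR n < 2 ^ n).
  { induction n. simpl; lra. rewrite S_INR. simpl. assert (1 <= 2^n) by (apply pow_R1_Rle; lra). lra. }
  apply Rlt_trans with (INR (Z.to_nat (up r))); auto.
  rewrite INR_IZR_INZ, Z2Nat.id. lra. apply le_IZR. lra.
Qed.

Section LA.
Variable Sv : R -> R.
Variable e : R -> R.
Hypothesis HS : is_survival_of_positive_rv Sv.
Hypothesis Hg : gumbel_MDA_expR Sv e.
Hypothesis Hi : infinite_upper_endpoint_expR Sv.
Hypothesis He : forall t, 0 < e t.
Let G := tail_expR Sv.

Fixpoint tsq (x t : R) (n : nat) : R :=
  match n with O => t | S n' => tsq x t n' + x * e (tsq x t n') end.

Lemma lemmaA : forall m : nat, exists K, 0 < K /\ exists T, forall t, T < t -> forall D, 0 < D ->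
  G (t + D) <= K * (e t / D) ^ m * G t.
Proof.
  intros m.
  set (Z := 2 ^ (m + 2)).
  assert (HZ4 : 4 <= Z).
  { unfold Z. rewrite pow_add. assert (1 <= 2^m) by (apply pow_R1_Rle; lra). simpl. lra. }
  set (x := 2 * ln Z).
  assert (Hx : 0 < x). { unfold x. assert (0 < ln Z) by (apply lngt0; lra). lra. }
  assert (Hex : exp (- x) = / (Z * Z)).
  { unfold x. rewrite exp_Ropp. replace (2 * ln Z) with (ln Z + ln Z) by ring. rewrite exp_plus, exp_ln by lra. reflexivity. }
  assert (HeZ : exp (- - ln Z) = Z). { rewrite Ropp_involutive. apply exp_ln. lra. }
  assert (HZZ : 0 < / (Z*Z)) by (apply Rinv_0_lt_compat; nra).
  destruct (mda_up Sv e Hg Hi x _ HZZ) as [T1 HT1].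
  destruct (mda_up Sv e Hg Hi (- ln Z) 1 Rlt_0_1) as [T2 HT2].
  rewrite Hex in HT1. rewrite HeZ in HT2.
  set (q := / (Z*Z) + / (Z*Z)).
  assert (Hq0 : 0 < q) by (unfold q; lra).
  assert (HGpos : forall y, 0 < G y) by exact Hi.
  assert (Hstep : forall t, Rmax T1 T2 < t -> e (t + x * e t) <= 2 * e t).
  { intros t Ht. apply Rmax_Rlt in Ht. destruct Ht as [Ht1 Ht2].
    destruct (Rle_dec (e (t + x * e t)) (2 * e t)) as [|Hn]; auto. exfalso.
    set (s := t + x * e t).
    assert (Hs : T2 < s). { unfold s. pose proof (He t). nra. }
    specialize (HT2 s Hs). specialize (HT1 t Ht1).
    assert (Hle : s + - ln Z * e s <= t).
    { unfold s, x in *. assert (0 < ln Z) by (apply lngt0; lra). nra. }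
    pose proof (G_mono Sv HS _ _ Hle). fold G in H, HT1, HT2. fold s in HT1.
    pose proof (HGpos t).
    assert (G t <= (Z + 1) * (q * G t)).
    { apply Rle_trans with (G (s + - ln Z * e s)); auto.
      apply Rle_trans with ((Z+1) * G s); auto. apply Rmult_le_compat_l; [lra|]. unfold q. lra. }
    assert (1 <= (Z+1) * q) by nra.
    unfold q in H2. assert ((Z+1) * (/ (Z*Z) + / (Z*Z)) = 2 * (Z+1) / (Z*Z)) by (field; lra).
    rewrite H3 in H2. apply Rmult_le_compat_r with (r := Z*Z) in H2; [|nra].
    unfold Rdiv in H2. rewrite Rmult_assoc, Rinv_l in H2 by nra. nra. }
  assert (Hiter : forall t, Rmax T1 T2 < t -> forall n,
    Rmax T1 T2 < tsq x t n /\ tsq x t n - t <= x * e t * (2 ^ n - 1) /\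
    e (tsq x t n) <= 2 ^ n * e t /\ G (tsq x t n) <= q ^ n * G t).
  { intros t Ht n. induction n as [|n IH].
    - simpl. repeat split; lra.
    - destruct IH as [I1 [I2 [I3 I4]]]. simpl tsq.
      pose proof (He (tsq x t n)). pose proof (He t).
      assert (Ht1 : T1 < tsq x t n) by (apply Rmax_Rlt in I1; tauto).
      repeat split.
      + nra.
      + simpl. nra.
      + simpl. pose proof (Hstep _ I1). nra.
      + simpl. specialize (HT1 _ Ht1). fold G in HT1.
        apply Rle_trans with (q * G (tsq x t n)); [unfold q; lra|].
        rewrite Rmult_assoc. apply Rmult_le_compat_l; lra. }
  exists ((2 * x) ^ m). split; [apply pow_lt; lra|].
  exists (Rmax T1 T2). intros t Ht D HD.
  pose proof (He t) as Het. pose proof (HGpos t) as HGt.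
  destruct (Rlt_dec D (x * e t)) as [Hsm|Hbig].
  - apply Rle_trans with (G t). { apply G_mono; auto. lra. }
    rewrite <- Rpow_mult_distr.
    assert (1 <= 2 * x * (e t / D)).
    { unfold Rdiv. apply Rmult_le_reg_r with D; auto.
      rewrite !Rmult_assoc, Rinv_l, Rmult_1_r by lra. nra. }
    assert (1 <= (2 * x * (e t / D)) ^ m) by (apply pow_R1_Rle; auto). nra.
  - assert (Hr : 1 <= D / (x * e t)).
    { apply Rmult_le_reg_r with (x * e t); [nra|]. unfold Rdiv.
      rewrite Rmult_assoc, Rinv_l by nra. lra. }
    destruct (pow2_bracket _ Hr) as [n [Hn1 Hn2]].
    destruct (Hiter t Ht n) as [_ [I2 [_ I4]]].
    assert (Htn : tsq x t n <= t + D).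
    { assert (x * e t * 2 ^ n <= D).
      { apply Rmult_le_compat_l with (r := x * e t) in Hn1; [|nra].
        unfold Rdiv in Hn1. rewrite Rmult_comm with (r1 := D), <- Rmult_assoc, Rinv_r, Rmult_1_l in Hn1 by nra. lra. }
      nra. }
    apply Rle_trans with (G (tsq x t n)). { apply G_mono; auto. }
    apply Rle_trans with (q ^ n * G t); auto.
    apply Rmult_le_compat_r; [lra|].
    assert (Hq : q <= (/ 2) ^ m).
    { unfold q. replace (/ (Z*Z) + / (Z*Z)) with (2 / (Z*Z)) by (field; lra).
      rewrite pow_inv. unfold Z. rewrite <- pow_add.
      assert (2 ^ (m+1) <= 2 ^ (m + 2 + (m + 2))) by (apply Rle_pow; [lra|lia]).
      rewrite pow_add in H. simpl in H.
      assert (0 < 2 ^ m) by (apply pow_lt; lra).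
      assert (0 < 2 ^ (m + 2 + (m + 2))) by (apply pow_lt; lra).
      unfold Rdiv. apply Rmult_le_reg_r with (2 ^ (m + 2 + (m + 2)) * 2 ^ m); [nra|].
      replace (2 * / 2 ^ (m + 2 + (m + 2)) * (2 ^ (m + 2 + (m + 2)) * 2 ^ m)) with (2 * 2^m) by (field; lra).
      replace (/ 2 ^ m * (2 ^ (m + 2 + (m + 2)) * 2 ^ m)) with (2 ^ (m + 2 + (m + 2))) by (field; lra).
      lra. }
    assert (Hqn : q ^ n <= ((/ 2) ^ n) ^ m).
    { rewrite <- pow_mult, Nat.mul_comm, pow_mult. apply pow_incr. lra. }
    apply Rle_trans with (((/ 2) ^ n) ^ m); auto.
    rewrite <- Rpow_mult_distr. apply pow_incr. split.
    + apply pow_le; lra.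
    + rewrite pow_inv. assert (0 < 2 ^ n) by (apply pow_lt; lra).
      simpl in Hn2.
      assert (D < 2 * 2 ^ n * (x * e t)).
      { apply Rmult_lt_compat_r with (r := x * e t) in Hn2; [|nra].
        unfold Rdiv in Hn2. rewrite Rmult_assoc, Rinv_l, Rmult_1_r in Hn2 by nra. lra. }
      apply Rmult_le_reg_r with (2 ^ n * D); [nra|].
      replace (/ 2 ^ n * (2 ^ n * D)) with D by (field; lra).
      replace (2 * x * (e t / D) * (2 ^ n * D)) with (2 * 2 ^ n * (x * e t)) by (field; lra).
      lra.
Qed.
End LA.

Lemma phi_props S lam beta gu v : is_survival_of_positive_rv S -> 0 < lam -> lam < v -> 0 < beta -> 0 < gu ->
  (forall th, 0 <= prob_lam_exp_gt S lam (th*beta*gu) v <= 1) /\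
  prob_lam_exp_gt S lam (0*beta*gu) v = 0 /\
  (forall th, 0 < th -> prob_lam_exp_gt S lam (th*beta*gu) v = S (ln (v/lam) / (th*(beta*gu)))) /\
  (forall t1 t2, 0 <= t1 -> t1 <= t2 -> prob_lam_exp_gt S lam (t1*beta*gu) v <= prob_lam_exp_gt S lam (t2*beta*gu) v).
Proof.
  intros HS Hl Hv Hb Hg.
  assert (HS1 : forall x, 0 <= S x <= 1) by apply HS.
  assert (HS2 : forall x y, x <= y -> S y <= S x) by apply HS.
  assert (P0 : prob_lam_exp_gt S lam (0*beta*gu) v = 0).
  { unfold prob_lam_exp_gt. destruct (Rle_dec v 0); [lra|].
    destruct (Rlt_dec 0 (0*beta*gu)); [lra|].
    destruct (Req_dec_T (0*beta*gu) 0); [|lra]. destruct (Rlt_dec v lam); lra. }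
  assert (Ppos : forall th, 0 < th -> prob_lam_exp_gt S lam (th*beta*gu) v = S (ln (v/lam) / (th*(beta*gu)))).
  { intros th Hth. unfold prob_lam_exp_gt. destruct (Rle_dec v 0); [lra|].
    destruct (Rlt_dec 0 (th*beta*gu)) as [|n0]; [|exfalso; apply n0; apply Rmult_lt_0_compat; [apply Rmult_lt_0_compat|]; lra].
    f_equal. f_equal. ring. }
  split; [|split; [exact P0|split; [exact Ppos|]]].
  - intros th. destruct (Rlt_dec 0 th).
    + rewrite Ppos; auto.
    + unfold prob_lam_exp_gt. destruct (Rle_dec v 0); [lra|].
      destruct (Rlt_dec 0 (th*beta*gu)); auto.
      destruct (Req_dec_T (th*beta*gu) 0); [destruct (Rlt_dec v lam)|]; lra.
  - intros t1 t2 H1 H2. destruct (Req_dec t1 0) as [->|Hn].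
    + rewrite P0. destruct (Req_dec t2 0) as [->|]. rewrite P0; lra. rewrite Ppos by lra. apply HS1.
    + rewrite !Ppos by lra. apply HS2.
      assert (0 < ln (v/lam)). { apply lngt0. apply (Rmult_lt_reg_r lam); [lra|]. unfold Rdiv. rewrite Rmult_assoc, Rinv_l; lra. }
      unfold Rdiv. apply Rmult_le_compat_l; [lra|]. apply Rinv_le_contravar.
      * apply Rmult_lt_0_compat; [|apply Rmult_lt_0_compat]; lra.
      * apply Rmult_le_compat_r; [|lra]. apply Rlt_le, Rmult_lt_0_compat; lra.
Qed.

Lemma E_mono_inc p t1 t2 : p < 0 -> 0 <= t1 -> t1 <= t2 -> t2 < 1 ->
  Rpower (1 - t1^2) p <= Rpower (1 - t2^2) p.
Proof.
  intros. unfold Rpower. apply exple.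
  assert (ln (1 - t2^2) <= ln (1 - t1^2)) by (apply lnle; nra). nra.
Qed.
Lemma E_mono_dec p t1 t2 : 0 <= p -> 0 <= t1 -> t1 <= t2 -> t2 < 1 ->
  Rpower (1 - t2^2) p <= Rpower (1 - t1^2) p.
Proof.
  intros. unfold Rpower. apply exple.
  assert (ln (1 - t2^2) <= ln (1 - t1^2)) by (apply lnle; nra). nra.
Qed.

Lemma g_int S lam beta gu v d tm : is_survival_of_positive_rv S -> 0 < lam -> lam < v -> 0 < beta -> 0 < gu ->
  0 < tm < 1 ->
  Riemann_integrable (fun th => prob_lam_exp_gt S lam (th*beta*gu) v * f_dens d th) 0 tm.
Proof.
  intros HS Hl Hv Hb Hg Htm.
  destruct (phi_props S lam beta gu v HS Hl Hv Hb Hg) as [B [P0 [Pp Pm]]].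
  set (phi := fun th => prob_lam_exp_gt S lam (th*beta*gu) v).
  set (p := (INR d - 3) / 2).
  set (E := fun th => Rpower (1 - th^2) p).
  set (Cf := gamma_half d / (sqrt PI * gamma_half (d - 1))).
  assert (HE : forall th, 0 < E th) by (intros; unfold E, Rpower; apply exp_pos).
  assert (Hphi : Riemann_integrable phi 0 tm).
  { apply mono_int; [lra|]. intros; apply Pm; lra. }
  assert (HpE : Riemann_integrable (fun th => phi th * E th) 0 tm).
  { destruct (Rlt_dec p 0) as [Hp|Hp].
    - apply mono_int; [lra|]. intros x y Hx Hxy Hy.
      apply Rmult_le_compat; try (apply B); try (apply Rlt_le, HE).
      + apply Pm; lra.
      + apply E_mono_inc; lra.
    - assert (Hpp : Riemann_integrable (fun th => phi th * (1 - E th)) 0 tm).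
      { apply mono_int; [lra|]. intros x y Hx Hxy Hy.
        assert (E y <= E x) by (apply E_mono_dec; lra).
        assert (E x <= 1).
        { unfold E. replace 1 with (Rpower (1 - 0^2) p) at 2.
          apply E_mono_dec; lra. unfold Rpower. replace (1 - 0^2) with 1 by ring. rewrite ln_1, Rmult_0_r. apply exp_0. }
        apply Rmult_le_compat; try (apply B); try lra. apply Pm; lra. }
      apply (@Riemann_integrable_ext (fun th => phi th + (-1) * (phi th * (1 - E th))) (fun th => phi th * E th) 0 tm).
      + intros; ring.
      + apply RiemannInt_P10; auto. }
  apply (@Riemann_integrable_ext (fun th => Cf * (phi th * E th)) (fun th => prob_lam_exp_gt S lam (th*beta*gu) v * f_dens d th) 0 tm).
  - intros. unfold f_dens, phi, E, Cf, p. ring.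
  - apply (Riemann_integrable_scal Cf HpE).
Qed.
Module FtcM.
Import Coquelicot.Coquelicot.

Lemma int_h (c q tm : R) : 0 < tm < 1 -> q + 1 < 0 ->
  exists pr : Riemann_integrable (fun th => c * exp (q * ln (1 - th))) 0 tm,
    RiemannInt pr = c * (exp ((q+1) * ln (1 - tm)) - 1) / (-(q+1)).
Proof.
  intros Htm Hq.
  set (F := fun th => c * exp ((q+1) * ln (1 - th)) / (-(q+1))).
  assert (HI : is_RInt (fun th => c * exp (q * ln (1 - th))) 0 tm (minus (F tm) (F 0))).
  { apply (@is_RInt_derive R_CompleteNormedModule F (fun th => c * exp (q * ln (1 - th))) 0 tm).
    - intros x Hx. rewrite Rmin_left, Rmax_right in Hx by lra.
      unfold F. auto_derive.
      + lra.
      + replace (1 + - x) with (1 - x) by ring.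
        replace (exp ((q+1) * ln (1 - x))) with (exp (q * ln (1-x)) * exp (ln (1-x))).
        * rewrite exp_ln by lra. field. split; lra.
        * rewrite <- exp_plus. f_equal. ring.
    - intros x Hx. rewrite Rmin_left, Rmax_right in Hx by lra.
      apply (@ex_derive_continuous R_AbsRing R_NormedModule). auto_derive. lra. }
  exists (ex_RInt_Reals_0 _ _ _ (ex_intro _ _ HI)).
  rewrite <- RInt_Reals. rewrite (is_RInt_unique _ _ _ _ HI).
  unfold minus, plus, opp; simpl. unfold F. rewrite Rminus_0_r, ln_1, Rmult_0_r, exp_0. field. lra.
Qed.

End FtcM.
Import FtcM.

Lemma f_bound d th : 0 <= th < 1 ->
  Rabs (f_dens d th) <= Rabs (gamma_half d / (sqrt PI * gamma_half (d - 1))) *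
     exp (Rabs ((INR d - 3) / 2)) * exp ((INR d - 3) / 2 * ln (1 - th)).
Proof.
  intros Hth. unfold f_dens, Rpower. set (p := (INR d - 3) / 2). set (Cf := gamma_half d / _).
  rewrite Rabs_mult, (Rabs_right (exp _)) by (apply Rle_ge, Rlt_le, exp_pos).
  rewrite Rmult_assoc. apply Rmult_le_compat_l; [apply Rabs_pos|].
  rewrite <- exp_plus. apply exple.
  replace (1 - th^2) with ((1-th)*(1+th)) by ring. rewrite ln_mult by lra.
  assert (0 <= ln (1 + th)) by (rewrite <- ln_1; apply lnle; lra).
  assert (ln (1 + th) <= th).
  { pose proof (exp_ineq1_le th). rewrite <- (ln_exp th) at 2. apply lnle; lra. }
  assert (p * ln (1+th) <= Rabs p).
  { destruct (Rle_dec 0 p). rewrite Rabs_right by lra. nra. rewrite Rabs_left by lra. nra. }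
  lra.
Qed.

Lemma ln_div' x y : 0 < x -> 0 < y -> ln (x / y) = ln x - ln y.
Proof. intros. unfold Rdiv. rewrite ln_mult, ln_Rinv; try lra. apply Rinv_0_lt_compat; lra. Qed.

Lemma pow_exp x (m : nat) : 0 < x -> x ^ m = exp (INR m * ln x).
Proof. intros. rewrite <- ln_pow by auto. rewrite exp_ln; auto. apply pow_lt; auto. Qed.

Lemma phi_bound (S e : R -> R) (K T : R) (m : nat) (b L ld w eta lam0 th : R) :
  (forall t, T < t -> forall D, 0 < D -> tail_expR S (t + D) <= K * (e t / D) ^ m * tail_expR S t) ->
  (forall t, 0 < e t) -> 0 <= K ->
  (forall y, 0 < tail_expR S y) ->
  0 < b -> 0 < L -> 0 <= ld -> w = exp ((L + ld) / b) -> T < w ->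
  0 < eta < 1 -> 0 < lam0 < 1 -> ld <= (1 - eta) * L * lam0 ->
  0 < th <= 1 - lam0 ->
  S (L / (th * b)) <= K * exp (INR m * ln (e w * b / (w * eta * L)) - INR m * ln (1 - th)) * tail_expR S w.
Proof.
  intros HA He HK Hpos Hb HL Hld Hw HT Heta Hl0 Hcond Hth.
  assert (Hw0 : 0 < w) by (rewrite Hw; apply exp_pos).
  set (E := L / (th * b) - (L + ld) / b).
  assert (HE : eta * L * (1 - th) / b <= E).
  { assert (HEq : E = (L / th - L - ld) / b) by (unfold E; field; lra).
    rewrite HEq. unfold Rdiv at 1 2. apply Rmult_le_compat_r; [apply Rlt_le, Rinv_0_lt_compat; lra|].
    assert (L / th - L >= L * (1 - th)).
    { replace (L / th - L) with (L * (1 - th) * / th) by (field; lra).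
      apply Rle_ge. replace (L * (1-th)) with (L * (1-th) * 1) at 1 by ring.
      apply Rmult_le_compat_l; [nra|]. replace 1 with (/1) by field. apply Rinv_le_contravar; lra. }
    assert ((1 - eta) * L * lam0 <= (1 - eta) * L * (1 - th)).
    { apply Rmult_le_compat_l; [nra|lra]. }
    nra. }
  assert (HE0 : 0 < eta * L * (1 - th) / b) by (apply Rdiv_lt_0_compat; [repeat apply Rmult_lt_0_compat|]; lra).
  set (Y := exp (L / (th * b))).
  assert (HY : Y = w * exp E).
  { unfold Y, E. rewrite Hw, <- exp_plus. f_equal. ring. }
  set (D := Y - w).
  assert (HD : w * (eta * L * (1 - th) / b) <= D).
  { unfold D. rewrite HY. pose proof (exp_ineq1_le E). nra. }
  assert (HD0 : 0 < D) by nra.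
  assert (HSY : S (L / (th * b)) = tail_expR S (w + D)).
  { unfold tail_expR. replace (w + D) with Y by (unfold D; ring).
    destruct (Rlt_dec 0 Y) as [|n]; [|exfalso; apply n; apply exp_pos].
    unfold Y. rewrite ln_exp. reflexivity. }
  rewrite HSY. eapply Rle_trans. apply HA; auto.
  pose proof (Hpos w). pose proof (He w).
  apply Rmult_le_compat_r; [lra|]. apply Rmult_le_compat_l; auto.
  set (A0 := e w * b / (w * eta * L)).
  assert (HA0 : 0 < A0) by (unfold A0; apply Rdiv_lt_0_compat; [nra|repeat apply Rmult_lt_0_compat; lra]).
  replace (INR m * ln A0 - INR m * ln (1 - th)) with (INR m * ln (A0 / (1 - th))) by (rewrite ln_div'; lra).
  rewrite <- pow_exp by (apply Rdiv_lt_0_compat; lra).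
  apply pow_incr. split. apply Rlt_le, Rdiv_lt_0_compat; lra.
  unfold A0. unfold Rdiv. apply Rmult_le_reg_r with (D * (1 - th) * (w * eta * L)).
  { repeat apply Rmult_lt_0_compat; lra. }
  replace (e w * / D * (D * (1 - th) * (w * eta * L))) with (e w * (1 - th) * (w * eta * L)) by (field; lra).
  replace (e w * b * / (w * eta * L) * / (1 - th) * (D * (1 - th) * (w * eta * L))) with (e w * b * D) by (field; repeat split; lra).
  assert (w * eta * L * (1 - th) <= b * D).
  { apply Rmult_le_compat_l with (r := b) in HD; [|lra].
    replace (b * (w * (eta * L * (1 - th) / b))) with (w * eta * L * (1 - th)) in HD by (field; lra). lra. }
  assert (0 < e w) by auto. nra.
Qed.

Theorem mainTheorem6
  (d : nat) (hd : (2 <= d)%nat)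
  (S : R -> R) (hS : is_survival_of_positive_rv S)
  (hinf : infinite_upper_endpoint_expR S)
  (e : R -> R) (he_pos : forall t, 0 < e t) (hgum : gumbel_MDA_expR S e)
  (lam beta : R) (hlam : 0 < lam) (hbeta : 0 < beta)
  (gam : R -> R) (hgam_pos : forall u, 0 < gam u)
  (gamma : R) (hgamma : 0 < gamma)
  (hgam_lim : forall eps, 0 < eps -> exists U, forall u, U < u -> Rabs (gam u - gamma) < eps)
  (k : R) (hk : INR d < k) :
  forall eps, 0 < eps -> exists U, forall u, U < u ->
    exists pr : Riemann_integrable
        (fun theta => prob_lam_exp_gt S lam (theta * beta * gam u) (u / INR d)
                      * f_dens d theta)
        0 (1 - ln k / ln u),
      Rabs (RiemannInt pr) <=
        eps * Rabs (Rpower (e_star e lam beta gam u / (u * ln u)) ((INR d - 1) / 2)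
                    * prob_lam_exp_gt S lam (beta * gam u) u).
Proof.
  intros eps Heps.
  set (dR := INR d).
  assert (HdR : 2 <= dR) by (unfold dR; replace 2 with (INR 2) by (simpl; lra); apply le_INR; auto).
  set (ld := ln dR).
  assert (Hld : 0 < ld) by (apply lngt0; lra).
  set (lk := ln k).
  assert (hk2 : dR < k) by exact hk.
  assert (Hlk : ld < lk) by (apply ln_increasing; lra).
  set (p := (dR - 3) / 2).
  set (q := p - dR).
  assert (Hq1 : q + 1 < 0) by (unfold q, p; lra).
  set (eta := (lk - ld) / (lk + ld)).
  assert (Heta : 0 < eta < 1).
  { unfold eta. split. apply Rdiv_lt_0_compat; lra.
    apply Rmult_lt_reg_r with (lk + ld); [lra|]. unfold Rdiv. rewrite Rmult_assoc, Rinv_l; lra. }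
  assert (H1eta : 1 - eta = 2 * ld / (lk + ld)) by (unfold eta; field; lra).
  set (Cf := gamma_half d / (sqrt PI * gamma_half (d - 1))).
  destruct (lemmaA S e hS hgum hinf he_pos d) as [K [HK [TA HTA]]].
  set (c1 := Rabs Cf * exp (Rabs p) * K).
  assert (Hc1 : 0 <= c1).
  { unfold c1. apply Rmult_le_pos; [apply Rmult_le_pos|]; try lra. apply Rabs_pos. apply Rlt_le, exp_pos. }
  set (c2 := c1 / (- (q + 1))).
  assert (Hc2 : 0 <= c2) by (unfold c2; apply Rmult_le_pos; [lra|apply Rlt_le, Rinv_0_lt_compat; lra]).
  assert (Hlk0 : 0 < lk) by lra.
  set (Kc := ln (c2 + 1) + dR * ln 2 - dR * ln eta + (q + 1) * ln lk).
  set (del1 := Rmin 1 (eps * exp (- Kc))).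
  assert (Hdel1 : 0 < del1).
  { unfold del1. apply Rmin_pos; [lra|]. apply Rmult_lt_0_compat; [lra|apply exp_pos]. }
  set (del := del1 / (2 * beta * gamma)).
  assert (Hdel : 0 < del) by (unfold del; apply Rdiv_lt_0_compat; [lra|]; nra).
  destruct (e_small S e hS hgum hinf he_pos del Hdel) as [TB HTB].
  destruct (hgam_lim (gamma / 2)) as [Ug HUg]; [lra|].
  set (W := Rmax 1 (Rmax TA TB + 1)).
  assert (HW1 : 1 <= W) by (unfold W; apply Rmax_l).
  assert (HWA : TA < W /\ TB < W).
  { unfold W. pose proof (Rmax_r 1 (Rmax TA TB + 1)). pose proof (Rmax_l TA TB). pose proof (Rmax_r TA TB). lra. }
  set (c := ln (dR * lam)).
  set (Lam := Rmax (lk + 1) (Rmax (2 * Rabs c + 1) (Rmax (2 * lk * Rabs c / (lk - ld))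
               (Rabs (ln lam) + 2 * beta * gamma * ln W + 1)))).
  exists (Rmax Ug (exp Lam)). intros u Hu.
  apply Rmax_Rlt in Hu. destruct Hu as [HuG HuL].
  assert (Hu0 : 0 < u) by (pose proof (exp_pos Lam); lra).
  set (lu := ln u).
  assert (HluL : Lam < lu) by (unfold lu; rewrite <- (ln_exp Lam); apply ln_increasing; auto; apply exp_pos).
  assert (HL1 : lk + 1 <= Lam) by apply Rmax_l.
  assert (HL2 : 2 * Rabs c + 1 <= Lam) by (unfold Lam; eapply Rle_trans; [|apply Rmax_r]; apply Rmax_l).
  assert (HL3 : 2 * lk * Rabs c / (lk - ld) <= Lam) by
    (unfold Lam; eapply Rle_trans; [|apply Rmax_r]; eapply Rle_trans; [|apply Rmax_r]; apply Rmax_l).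
  assert (HL4 : Rabs (ln lam) + 2 * beta * gamma * ln W + 1 <= Lam) by
    (unfold Lam; eapply Rle_trans; [|apply Rmax_r]; eapply Rle_trans; [|apply Rmax_r]; apply Rmax_r).
  specialize (HUg u HuG). apply Rabs_def2 in HUg.
  set (gu := gam u). fold gu in HUg.
  set (b := beta * gu).
  assert (Hb : beta * gamma / 2 < b < 2 * beta * gamma) by (unfold b; split; nra).
  assert (Hb0 : 0 < b) by nra.
  set (L := ln (u / dR / lam)).
  assert (HLeq : L = lu - c).
  { unfold L, c, lu. rewrite ln_div', ln_div', ln_mult; try lra.
    all: try (apply Rdiv_lt_0_compat; lra). }
  assert (Hcabs : c <= Rabs c) by apply Rle_abs.
  assert (HL : lu / 2 <= L) by lra.
  assert (HL0 : 0 < L) by lra.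
  assert (Hv : lam < u / dR).
  { assert (1 < u / dR / lam).
    { apply ln_lt_inv; try lra. apply Rdiv_lt_0_compat; [apply Rdiv_lt_0_compat|]; lra. rewrite ln_1. exact HL0. }
    assert (u/dR = (u/dR/lam)*lam) by (field; lra). nra. }
  set (lam0 := lk / lu).
  assert (Hlam0 : 0 < lam0 < 1).
  { unfold lam0. split. apply Rdiv_lt_0_compat; lra.
    apply Rmult_lt_reg_r with lu; [lra|]. unfold Rdiv. rewrite Rmult_assoc, Rinv_l; lra. }
  set (tm := 1 - lam0).
  assert (Htm : 0 < tm < 1) by (unfold tm; lra).
  assert (Hcond : ld <= (1 - eta) * L * lam0).
  { rewrite H1eta.
    assert (HLl : (lk + ld) / 2 <= L * lam0).
    { unfold lam0. rewrite HLeq. replace ((lu - c) * (lk / lu)) with (lk - c * lk / lu) by (field; lra).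
      assert (c * lk / lu <= (lk - ld) / 2).
      { apply Rmult_le_reg_r with (lu * (lk - ld)); [nra|].
        replace (c * lk / lu * (lu * (lk - ld))) with (c * lk * (lk - ld)) by (field; lra).
        assert (2 * lk * Rabs c <= Lam * (lk - ld)).
        { apply Rmult_le_compat_r with (r := lk - ld) in HL3; [|lra].
          unfold Rdiv in HL3. rewrite Rmult_assoc, Rinv_l in HL3 by lra. lra. }
        assert (c * lk * (lk - ld) <= Rabs c * lk * (lk - ld)).
        { apply Rmult_le_compat_r; [lra|]. apply Rmult_le_compat_r; lra. }
        assert (Lam * (lk - ld) * (lk - ld) <= lu * (lk - ld) * (lk - ld)).
        { apply Rmult_le_compat_r; [lra|]. apply Rmult_le_compat_r; lra. }
        assert (2 * lk * Rabs c * (lk - ld) <= Lam * (lk - ld) * (lk - ld)).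
        { apply Rmult_le_compat_r; lra. }
        lra. }
      lra. }
    replace (2 * ld / (lk + ld) * L * lam0) with (2 * ld / (lk + ld) * (L * lam0)) by ring.
    apply Rle_trans with (2 * ld / (lk + ld) * ((lk + ld) / 2)).
    - right. field. lra.
    - apply Rmult_le_compat_l; auto. apply Rlt_le, Rdiv_lt_0_compat; lra. }
  set (w := w_fun lam beta gam u).
  assert (Hlnul : ln (u / lam) = L + ld).
  { unfold L, ld. rewrite !ln_div'; try lra. all: try (apply Rdiv_lt_0_compat; lra). }
  assert (Hw : w = exp ((L + ld) / b)).
  { unfold w, w_fun, Rpower. fold gu. fold b. f_equal. rewrite Hlnul. field. lra. }
  assert (Hw0 : 0 < w) by (rewrite Hw; apply exp_pos).
  assert (HwW : W <= w).
  { rewrite Hw. rewrite <- (exp_ln W) by lra. apply exple.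
    assert (0 <= ln W) by (rewrite <- ln_1; apply lnle; lra).
    assert (2 * beta * gamma * ln W <= L + ld).
    { rewrite <- Hlnul. unfold lu in HluL. rewrite ln_div' by lra. pose proof (Rle_abs (ln lam)). lra. }
    apply Rmult_le_reg_r with b; [lra|]. unfold Rdiv. rewrite Rmult_assoc, Rinv_l by lra. nra. }
  assert (HwA : TA < w) by lra.
  assert (HewB : e w <= del * w) by (apply HTB; lra).
  set (a := b * e w / w).
  assert (Ha0 : 0 < a) by (unfold a; apply Rdiv_lt_0_compat; [apply Rmult_lt_0_compat; auto|lra]).
  assert (Ha1 : a <= del1).
  { unfold a. apply Rmult_le_reg_r with w; [lra|]. unfold Rdiv. rewrite Rmult_assoc, Rinv_l, Rmult_1_r by lra.
    apply Rle_trans with (b * (del * w)). apply Rmult_le_compat_l; lra.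
    unfold del. replace (b * (del1 / (2 * beta * gamma) * w)) with (del1 * w * (b / (2 * beta * gamma))) by (field; lra).
    assert (b / (2 * beta * gamma) <= 1).
    { apply Rmult_le_reg_r with (2 * beta * gamma); [nra|]. unfold Rdiv. rewrite Rmult_assoc, Rinv_l; nra. }
    assert (0 <= del1 * w) by nra. nra. }
  pose proof (g_int S lam beta gu (u / dR) d tm hS hlam Hv hbeta (hgam_pos u) Htm) as prg.
  exists prg.
  set (A0 := e w * b / (w * eta * L)).
  set (C := c1 * tail_expR S w * exp (dR * ln A0)).
  destruct (int_h C q tm Htm Hq1) as [prh Hprh].
  assert (Hbound : Rabs (RiemannInt prg) <= RiemannInt prh).
  { eapply Rle_trans. apply (RiemannInt_P17 prg (RiemannInt_P16 prg)); lra.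
    apply RiemannInt_P19; [lra|]. intros th Hth.
    destruct (phi_props S lam beta gu (u / dR) hS hlam Hv hbeta (hgam_pos u)) as [B [_ [Pp _]]].
    rewrite Rabs_mult. rewrite (Rabs_right (prob_lam_exp_gt _ _ _ _)) by (apply Rle_ge, B).
    rewrite (Pp th) by lra. fold L.
    pose proof (phi_bound S e K TA d b L ld w eta lam0 th HTA he_pos (Rlt_le _ _ HK) hinf Hb0 HL0 (Rlt_le _ _ Hld) Hw HwA Heta Hlam0 Hcond) as Hp.
    fold b. 
    assert (Hth' : 0 < th <= 1 - lam0) by (unfold tm in Hth; lra).
    specialize (Hp Hth').
    pose proof (f_bound d th) as Hf. 
    assert (Hf' : Rabs (f_dens d th) <= Rabs Cf * exp (Rabs p) * exp (p * ln (1 - th))) by (apply Hf; lra).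
    eapply Rle_trans. apply Rmult_le_compat; [apply (proj1 hS)|apply Rabs_pos| |].
    { replace (th * b) with (th * (beta * gu)) by reflexivity. exact Hp. }
    exact Hf'.
    unfold C, c1. fold dR. fold A0.
    replace (exp (dR * ln A0 - dR * ln (1 - th))) with (exp (dR * ln A0) * exp (- dR * ln (1 - th)))
      by (rewrite <- exp_plus; f_equal; ring).
    replace (exp (q * ln (1 - th))) with (exp (- dR * ln (1 - th)) * exp (p * ln (1 - th)))
      by (rewrite <- exp_plus; f_equal; unfold q; ring).
    right. ring. }
  eapply Rle_trans. exact Hbound. rewrite Hprh.
  set (Gw := tail_expR S w).
  assert (HGw : 0 < Gw) by apply hinf.
  assert (HP : prob_lam_exp_gt S lam b u = Gw).
  { unfold prob_lam_exp_gt, Gw, tail_expR. destruct (Rle_dec u 0); [lra|].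
    destruct (Rlt_dec 0 b) as [|n1]; [|exfalso; apply n1; exact Hb0].
    destruct (Rlt_dec 0 w) as [|n2]; [|lra]. f_equal. rewrite Hw, ln_exp, Hlnul. reflexivity. }
  assert (HE : e_star e lam beta gam u / (u * lu) = a / lu).
  { unfold e_star. fold w. fold gu. unfold a, b, lu. field. split; [|split]; try lra.
    apply Rgt_not_eq. fold lu. lra. }
  rewrite HP, HE.
  unfold Rpower. rewrite Rabs_mult, !Rabs_right by (apply Rle_ge; try apply Rlt_le; try apply exp_pos; lra).
  assert (Hla : ln (a / lu) = ln a - ln lu) by (apply ln_div'; lra).
  rewrite Hla.
  assert (HA0 : ln A0 = ln a - ln eta - ln L).
  { assert (A0 = a / (eta * L)) by (unfold A0, a; field; repeat split; lra).
    rewrite H, ln_div', ln_mult; try lra. apply Rmult_lt_0_compat; lra. }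
  assert (Hl0 : ln (1 - tm) = ln lk - ln lu) by (unfold tm; replace (1 - (1 - lam0)) with lam0 by ring; apply ln_div'; lra).
  rewrite Hl0.
  set (X := dR * (ln a - ln eta - ln L) + (q + 1) * (ln lk - ln lu)).
  set (Y := (dR - 1) / 2 * (ln a - ln lu)).
  assert (Hstep1 : C * (exp ((q + 1) * (ln lk - ln lu)) - 1) / - (q + 1) <= (c2 + 1) * exp X * Gw).
  { unfold C, X. rewrite HA0. rewrite exp_plus.
    assert (0 < exp (dR * (ln a - ln eta - ln L))) by apply exp_pos.
    assert (0 < exp ((q + 1) * (ln lk - ln lu))) by apply exp_pos.
    assert (C1 : c1 * Gw * exp (dR * (ln a - ln eta - ln L)) * (exp ((q + 1) * (ln lk - ln lu)) - 1) / - (q + 1)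
        <= c2 * (exp (dR * (ln a - ln eta - ln L)) * exp ((q + 1) * (ln lk - ln lu))) * Gw).
    { unfold c2. unfold Rdiv. 
      replace (c1 * Gw * exp (dR * (ln a - ln eta - ln L)) * (exp ((q + 1) * (ln lk - ln lu)) - 1) * / - (q + 1))
        with (c1 * / - (q + 1) * (exp (dR * (ln a - ln eta - ln L)) * exp ((q + 1) * (ln lk - ln lu))) * Gw
              - c1 * / - (q + 1) * exp (dR * (ln a - ln eta - ln L)) * Gw) by ring.
      assert (0 <= c1 * / - (q + 1) * exp (dR * (ln a - ln eta - ln L)) * Gw).
      { apply Rmult_le_pos; [|lra]. apply Rmult_le_pos; [|lra]. apply Rmult_le_pos; [lra|].
        apply Rlt_le, Rinv_0_lt_compat; lra. }
      lra. }
    eapply Rle_trans; [exact C1|]. apply Rmult_le_compat_r; [lra|]. apply Rmult_le_compat_r; [|lra].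
    apply Rmult_le_pos; lra. }
  eapply Rle_trans; [exact Hstep1|].
  assert (Hkey : (c2 + 1) * exp X <= eps * exp Y).
  { rewrite <- (exp_ln (c2 + 1)) by lra. rewrite <- (exp_ln eps) by lra. rewrite <- !exp_plus. apply exple.
  assert (HlnL : ln lu - ln 2 <= ln L).
  { rewrite <- ln_div' by lra. apply lnle; [apply Rdiv_lt_0_compat; lra|lra]. }
  assert (Hdel1' : del1 <= eps * exp (- Kc)) by apply Rmin_r.
  assert (Hdel11 : del1 <= 1) by apply Rmin_l.
  assert (Hlna : ln a <= ln eps - Kc).
  { apply Rle_trans with (ln (eps * exp (- Kc))).
    - apply lnle; lra.
    - rewrite ln_mult, ln_exp by (try lra; apply exp_pos). lra. }
  assert (Hlna0 : ln a <= 0) by (rewrite <- ln_1; apply lnle; lra).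
  assert (F1 : (dR - (dR - 1)/2 - 1) * ln a <= 0).
  { assert (0 <= dR - (dR - 1)/2 - 1) by lra. nra. }
  assert (F2 : dR * (ln lu - ln L - ln 2) <= 0).
  { assert (0 <= dR) by lra. nra. }
  unfold X, Y, Kc, q, p in *. lra. }
  apply Rle_trans with (eps * exp Y * Gw).
  - apply Rmult_le_compat_r; lra.
  - right. unfold Y. ring.
Qed.
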